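(* Let $N\ge1$, let $K$ be a nonempty compact subset of $\mathbb{R}_+^N=[0,\infty)^N$, let $X$ be a compact Hausdorff space, and let $T_n$ ($n\in\mathbb{N}$) and $A$ be weakly nonlinear and monotone operators from $C(K)$ into $C(X)$ such that $A(1)(x)>0$ for all $x\in X$ and $$A(1)\,A\Big(\sum_{k=1}^N\mathrm{pr}_k^2\Big)=\sum_{k=1}^N\big(A(-\mathrm{pr}_k)\big)^2 .$$ If $T_n(g)\to A(g)$ uniformly on $X$ for each of the functions $g=1,\,-\mathrm{pr}_1,\dots,-\mathrm{pr}_N,\,\sum_{k=1}^N\mathrm{pr}_k^2$, then $T_n(f)\to A(f)$ uniformly on $X$ for every $f\in C(K)$.
   Context: For a compact space $Y$, $C(Y)$ denotes the Banach lattice of continuous real-valued functions on $Y$ with the pointwise order and the sup norm; products and squares of functions are pointwise, and $1$ denotes the constant function one. $\mathrm{pr}_k:K\to\mathbb{R}$ is the $k$-th coordinate projection. An operator $T:C(K)\to C(X)$ is weakly nonlinear if $T(f+g)\le T(f)+T(g)$ and $T(\alpha f)=\alpha T(f)$ for all $f,g$ and $\alpha\ge0$, and $T(f+\alpha\cdot1)=T(f)+\alpha T(1)$ for all $f$ and $\alpha\ge0$. $T$ is monotone if $f\le g$ implies $T(f)\le T(g)$. *)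

(* Defs.v *)
From HB Require Import structures.
From mathcomp Require Import all_boot all_order all_algebra.
From mathcomp Require Import all_classical all_reals all_analysis.
Set Implicit Arguments. Unset Strict Implicit. Unset Printing Implicit Defensive.
Import Order.TTheory GRing.Theory Num.Theory.
Import numFieldNormedType.Exports.
Local Open Scope classical_set_scope.
Local Open Scope ring_scope.

(* An element of C(K) is represented by a function f : 'rV[R]_N -> R that is
   continuous on K (i.e. its restriction to K is continuous); values outside K
   are irrelevant: every operator considered below is required to be monotone
   w.r.t. the order of C(K) (pointwise on K), hence depends only on f|_K. *)

Section Defs.
Variables (R : realType) (N : nat) (X : topologicalType).

Definition inCK (K : set 'rV[R]_N) (f : 'rV[R]_N -> R) : Prop :=
  {within K, continuous f}.

Definition pr (k : 'I_N) : 'rV[R]_N -> R := fun x => x ord0 k.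

Definition maps_CK_CX (K : set 'rV[R]_N) (T : ('rV[R]_N -> R) -> X -> R) : Prop :=
  forall f, inCK K f -> continuous (T f).

Definition weakly_nonlinear (K : set 'rV[R]_N) (T : ('rV[R]_N -> R) -> X -> R) : Prop :=
  (forall f g, inCK K f -> inCK K g ->
     forall x, T (fun y => f y + g y) x <= T f x + T g x) /\
  (forall f (a : R), inCK K f -> 0 <= a ->
     T (fun y => a * f y) = (fun x => a * T f x)) /\
  (forall f (a : R), inCK K f -> 0 <= a ->
     T (fun y => f y + a) = (fun x => T f x + a * T (fun _ => 1) x)).

Definition monotone_op (K : set 'rV[R]_N) (T : ('rV[R]_N -> R) -> X -> R) : Prop :=
  forall f g, inCK K f -> inCK K g -> (forall y, K y -> f y <= g y) ->
    forall x, T f x <= T g x.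

Definition unif_cvg (u : nat -> X -> R) (v : X -> R) : Prop :=
  forall e : R, 0 < e -> exists n0 : nat, forall n, (n0 <= n)%N ->
    forall x, `|u n x - v x| < e.
End Defs.

(* Main.v *)
Require Import Defs.
From HB Require Import structures.
From mathcomp Require Import all_boot all_order all_algebra.
From mathcomp Require Import all_classical all_reals all_analysis.
From mathcomp Require Import ring lra.
Import Order.TTheory GRing.Theory Num.Theory.
Import numFieldNormedType.Exports.
Local Open Scope classical_set_scope.
Local Open Scope ring_scope.

Section Sx.
Variables (R : realType) (N : nat).
Lemma cont_sum (I : Type) (r : seq I) (F : I -> 'rV[R]_N -> R) :
  (forall i, continuous (F i)) -> continuous (fun y => \sum_(i <- r) F i y).
Proof.
move=> hF; elim: r => [|a r IH].
  have -> : (fun y : 'rV[R]_N => \sum_(i <- [::]) F i y) = (fun _ => 0).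
    by apply: funext => y; rewrite big_nil.
  exact: cst_continuous.
have -> : (fun y => \sum_(i <- a :: r) F i y) = (fun y => F a y + \sum_(i <- r) F i y).
  by apply: funext => y; rewrite big_cons.
by move=> y; apply: (@continuousD _ _ _ (F a) (fun y => \sum_(i <- r) F i y)); [apply: hF|apply: IH].
Qed.
Lemma contD (f g : 'rV[R]_N -> R) : continuous f -> continuous g -> continuous (fun y => f y + g y).
Proof. by move=> hf hg y; apply: (@continuousD _ _ _ f g); [apply: hf|apply: hg]. Qed.
Lemma contDc (f : 'rV[R]_N -> R) a : continuous f -> continuous (fun y => f y + a).
Proof. move=> hf; apply: (@contD f (fun _ => a) hf); exact: cst_continuous. Qed.
Lemma cont_pr k : continuous (pr (R:=R) (N:=N) k).
Proof. exact: coord_continuous. Qed.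
Lemma cont_within (K : set 'rV[R]_N) (f : 'rV[R]_N -> R) (a : R) : {within K, continuous f} -> {within K, continuous (fun y => f y + a)}.
Proof. move=> hf y; apply: (@continuousD R R^o (subspace K) f (fun _ => a)); [exact: hf|exact: cvg_cst]. Qed.
Lemma ballE (p y : 'rV[R]_N) e : ball p e y -> forall k, `|p ord0 k - y ord0 k| < e.
Proof. move=> [_ H] k. have := H ord0 k. by []. Qed.
End Sx.
Arguments ballE {R N p y e}.
Lemma bound_compact (R : realType) (T : topologicalType) (A : set T) (g : T -> R) :
  {within A, continuous g} -> compact A -> exists M, forall y, A y -> `|g y| <= M.
Proof.
move=> hg cA.
have := compact_bounded (continuous_compact hg cA).
case=> M0 [_ HM]; exists (M0 + 1) => y Ay.
apply: (HM (M0 + 1)); first by rewrite ltrDl.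
by exists y.
Qed.
Arguments bound_compact {R T A g}.

Lemma within_cont_ball (R : realType) (N : nat) (K : set 'rV[R]_N) (f : 'rV[R]_N -> R) z0 (e : R) :
  inCK K f -> K z0 -> 0 < e ->
  exists2 d, 0 < d & forall y, K y -> ball z0 d y -> `|f z0 - f y| < e.
Proof.
move=> fK Kz0 e0.
have := (subspace_continuousP K f).1 fK z0 Kz0 (ball (f z0) e).
move=> /(_ (nbhsx_ballx (f z0) e e0)).
rewrite /= nbhs_simpl /within /=.
move=> /nbhs_ballP [d d0 Hd]; exists d => // y Ky bz.
have := Hd y bz Ky.
by rewrite /ball /=.
Qed.
Arguments within_cont_ball {R N K f z0 e}.
Lemma notball (R : realType) (N : nat) (p y : 'rV[R]_N) (d : R) :
  0 < d -> ~ ball p d y -> exists k, d <= `|p ord0 k - y ord0 k|.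
Proof.
move=> d0 nb; apply: contrapT => H; apply: nb; split => // i j.
rewrite (ord1 i) /ball /= ltNge; apply/negP => hd; apply: H; by exists j.
Qed.
Arguments notball {R N p y d}.

Lemma sum_ge_term (R : realType) (N : nat) (F : 'I_N -> R) k :
  (forall i, 0 <= F i) -> F k <= \sum_(i < N) F i.
Proof.
move=> F0; rewrite (bigD1 k) //= lerDl; apply: sumr_ge0 => i _; exact: F0.
Qed.
Arguments sum_ge_term {R N} F k.

Lemma unif_est (R : realType) (N : nat) (K : set 'rV[R]_N) (f : 'rV[R]_N -> R) (eps : R) :
  compact K -> inCK K f -> 0 < eps ->
  exists c, 0 <= c /\ forall z y, K z -> K y ->
    `|f y - f z| <= eps + c * \sum_(k < N) (pr k y - z ord0 k) ^+ 2.
Proof.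
move=> cK fK e0.
have [M HM] := bound_compact fK cK.
pose P := fun (c : R) z => K z -> forall y, K y ->
    `|f y - f z| <= eps + c * \sum_(k < N) (pr k y - z ord0 k) ^+ 2.
have nc := (compact_near_coveringP K).1 cK R (pinfty_nbhs R) P _.
case: nc.
- move=> z0 Kz0.
  have M0 : 0 <= M by apply: le_trans (HM _ Kz0).
  have e20 : 0 < eps / 2 by rewrite divr_gt0.
  have [d d0 Hd] := within_cont_ball fK Kz0 e20.
  pose C := (8 * M) / (d ^+ 2).
  have C0 : 0 <= C by apply: divr_ge0; [apply: mulr_ge0 | exact: sqr_ge0].
  exists (ball z0 (d / 2), [set c | C < c]).
    split; first by apply: nbhsx_ballx; rewrite divr_gt0.
    by exists C; split; [exact: num_real|].
  case=> z c [/= zb cC] Kz y Ky.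
  have c0 : 0 <= c by apply: le_trans (ltW cC).
  have q0 : 0 <= \sum_(k < N) (pr k y - z ord0 k) ^+ 2.
    by apply: sumr_ge0 => k _; exact: sqr_ge0.
  have [by0|nby0] := pselect (ball z0 d y).
    have bz : ball z0 d z by apply: (le_ball _ zb); rewrite ler_pdivrMr // ler_pMr // ler1n.
    have h1 := Hd y Ky by0.
    have h2 := Hd z Kz bz.
    have -> : f y - f z = - (f z0 - f y) + (f z0 - f z) by ring.
    apply: (le_trans (ler_normD _ _)); rewrite normrN.
    have : 0 <= c * \sum_(k < N) (pr k y - z ord0 k) ^+ 2 by exact: mulr_ge0.
    lra.
  have [k hk] := notball d0 nby0.
  have hz := ballE zb k.
  have hzy : d / 2 <= `|z ord0 k - y ord0 k|.
    have : `|z0 ord0 k - y ord0 k| <= `|z0 ord0 k - z ord0 k| + `|z ord0 k - y ord0 k|.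
      have -> : z0 ord0 k - y ord0 k = (z0 ord0 k - z ord0 k) + (z ord0 k - y ord0 k) by ring.
      exact: ler_normD.
    lra.
  have sq : (d / 2) ^+ 2 <= (pr k y - z ord0 k) ^+ 2.
    rewrite -(real_normK (num_real (pr k y - z ord0 k))) distrC.
    apply: lerXn2r; rewrite ?nnegrE //; lra.
  have sq2 : (d / 2) ^+ 2 <= \sum_(k < N) (pr k y - z ord0 k) ^+ 2.
    apply: (le_trans sq); apply: (sum_ge_term (fun k => (pr k y - z ord0 k) ^+ 2)).
    by move=> i; exact: sqr_ge0.
  have hC : C * (d / 2) ^+ 2 = 2 * M.
    rewrite /C; field; exact: lt0r_neq0.
  have : C * (d / 2) ^+ 2 <= c * \sum_(k < N) (pr k y - z ord0 k) ^+ 2.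
    apply: ler_pM => //; [exact: sqr_ge0| exact: ltW].
  have hy := HM y Ky; have hz' := HM z Kz.
  have : `|f y - f z| <= `|f y| + `|f z| by rewrite -(normrN (f z)) ler_normD.
  lra.
- move=> C0 [_ HC].
  exists (Num.max C0 0 + 1); split.
    by apply: addr_ge0 => //; rewrite le_max lexx orbT.
  move=> z y Kz Ky; apply: (HC (Num.max C0 0 + 1)) => //.
  by apply: (le_lt_trans (_ : C0 <= Num.max C0 0)); rewrite ?ltrDl // le_max lexx.
Qed.
Section Ops.
Variables (R : realType) (N : nat) (X : topologicalType) (K : set 'rV[R]_N)
  (S : ('rV[R]_N -> R) -> X -> R).
Hypothesis hw : weakly_nonlinear K S.
Hypothesis hm : monotone_op K S.

Let C1 : 'rV[R]_N -> R := fun _ => 1.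

Lemma gc (f : 'rV[R]_N -> R) : continuous f -> inCK K f.
Proof. exact: continuous_subspaceT. Qed.

Lemma S0 x : S (fun _ => 0) x = 0.
Proof.
case: hw => _ [hom _].
have c1 : inCK K C1 by apply: gc; exact: cst_continuous.
have := hom C1 0 c1 (lexx 0).
have -> : (fun y => 0 * C1 y) = (fun _ => 0) by apply: funext => y; rewrite mul0r.
by move=> ->; rewrite mul0r.
Qed.

Lemma Str (h : 'rV[R]_N -> R) (a : R) x : inCK K h ->
  S (fun y => h y + a) x = S h x + a * S C1 x.
Proof.
case: hw => _ [_ tr] hh.
have [a0|a0] := leP 0 a; first by rewrite (tr h a hh a0).
have hh' : inCK K (fun y => h y + a) by exact: cont_within.
have na : 0 <= - a by rewrite oppr_ge0 ltW.
have := tr _ (- a) hh' na.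
have -> : (fun y => h y + a + - a) = h by apply: funext => y; rewrite addrK.
move/(congr1 (fun F => F x)) => /= ->.
ring.
Qed.

Lemma c1 : inCK K C1.
Proof. by apply: gc; exact: cst_continuous. Qed.

Lemma Scst (a : R) x : S (fun _ => a) x = a * S C1 x.
Proof.
have c0 : inCK K (fun _ => 0 : R) by apply: gc; exact: cst_continuous.
have := Str (fun _ => 0) a x c0.
have -> : (fun _ : 'rV[R]_N => 0 + a) = (fun _ => a) by apply: funext => y; rewrite add0r.
by move=> ->; rewrite S0 add0r.
Qed.

Lemma SN (h : 'rV[R]_N -> R) x : inCK K h -> inCK K (fun y => - h y) ->
  - S h x <= S (fun y => - h y) x.
Proof.
case: hw => sub _ hh hn.
have := sub _ _ hh hn x.
have -> : (fun y => h y + - h y) = (fun _ => 0) by apply: funext => y; rewrite subrr.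
rewrite S0 => H; lra.
Qed.

Lemma Ssum (I : Type) (r : seq I) (w : I -> R) (hs : I -> 'rV[R]_N -> R)
   (g : 'rV[R]_N -> R) x :
  (forall i, 0 <= w i) -> (forall i, continuous (hs i)) -> continuous g ->
  S (fun y => g y + \sum_(i <- r) w i * hs i y) x <=
  S g x + \sum_(i <- r) w i * S (hs i) x.
Proof.
case: hw => sub [hom _] w0 hc.
elim: r g => [|a r IH] g gc'.
  have -> : (fun y => g y + \sum_(i <- [::]) w i * hs i y) = g.
    by apply: funext => y; rewrite big_nil addr0.
  by rewrite big_nil addr0.
have -> : (fun y => g y + \sum_(i <- a :: r) w i * hs i y) =
   (fun y => (fun y => g y + w a * hs a y) y + \sum_(i <- r) w i * hs i y).
  by apply: funext => y; rewrite big_cons addrA.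
have gc2 : continuous (fun y : 'rV[R]_N => g y + w a * hs a y).
  move=> y; apply: (@continuousD _ _ _ g (fun y => w a * hs a y)); first exact: gc'.
  apply: (@continuousM R _ (fun _ => w a) (hs a)); [exact: cst_continuous|exact: hc].
apply: (le_trans (IH _ gc2)); rewrite big_cons addrA lerD2r.
have hc2 : inCK K (fun y => w a * hs a y).
  apply: gc => y; apply: (@continuousM R _ (fun _ => w a) (hs a)); [exact: cst_continuous|exact: hc].
have H := sub g (fun y => w a * hs a y) (gc _ gc') hc2 x.
rewrite (hom _ _ (gc _ (hc a)) (w0 a)) in H.
exact: H.
Qed.


Lemma cont_sq : continuous (fun y : 'rV[R]_N => \sum_(k < N) pr k y ^+ 2).
Proof.
apply: (@cont_sum R N _ _ (fun k y => pr k y ^+ 2)) => k.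
have -> : (fun y => pr k y ^+ 2) = (pr k \* pr k :  'rV[R]_N -> R).
  by apply: funext => y; rewrite expr2.
move=> y; apply: continuousM; exact: cont_pr.
Qed.

Lemma cont_Npr k : continuous (fun y : 'rV[R]_N => - pr k y).
Proof. move=> y; apply: continuousN; exact: cont_pr. Qed.

Lemma Sq (z : 'rV[R]_N) x : (forall k, 0 <= z ord0 k) ->
  S (fun y => \sum_(k < N) (pr k y - z ord0 k) ^+ 2) x <=
  S (fun y => \sum_(k < N) pr k y ^+ 2) x
  + \sum_(k < N) (2 * z ord0 k) * S (fun y => - pr k y) x
  + (\sum_(k < N) z ord0 k ^+ 2) * S C1 x.
Proof.
move=> z0.
pose g := fun y : 'rV[R]_N => \sum_(k < N) pr k y ^+ 2.
pose h := fun y : 'rV[R]_N => g y + \sum_(k < N) (2 * z ord0 k) * (fun k y => - pr k y) k y.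
have -> : (fun y => \sum_(k < N) (pr k y - z ord0 k) ^+ 2) =
   (fun y => h y + \sum_(k < N) z ord0 k ^+ 2).
  apply: funext => y; rewrite /h /g /= -!big_split /=.
  apply: eq_bigr => k _; ring.
have hc : continuous h.
  move=> y; apply: continuousD; first exact: cont_sq.
  apply: (@cont_sum R N _ _ (fun k y => (2 * z ord0 k) * - pr k y)) => k.
  move=> y'; apply: (@continuousM R _ (fun _ => 2 * z ord0 k) (fun y => - pr k y)).
    exact: cst_continuous.
  exact: cont_Npr.
rewrite Str; last exact: gc.
rewrite lerD2r.
have := @Ssum _ (index_enum 'I_N) (fun k => 2 * z ord0 k) (fun k y => - pr k y) g x.
apply.
- by move=> k; rewrite mulr_ge0.
- exact: cont_Npr.
- exact: cont_sq.
Qed.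

Lemma cont_qz (z : 'rV[R]_N) : continuous (fun y : 'rV[R]_N => \sum_(k < N) (pr k y - z ord0 k) ^+ 2).
Proof.
apply: (@cont_sum R N _ _ (fun k y => (pr k y - z ord0 k) ^+ 2)) => k.
have -> : (fun y => (pr k y - z ord0 k) ^+ 2) =
   ((fun y => pr k y - z ord0 k) \* (fun y => pr k y - z ord0 k) :  'rV[R]_N -> R).
  by apply: funext => y; rewrite expr2.
move=> y; apply: continuousM; apply: continuousB; (exact: cont_pr || exact: cst_continuous).
Qed.

Lemma cont_cqz (z : 'rV[R]_N) c : continuous (fun y : 'rV[R]_N => c * \sum_(k < N) (pr k y - z ord0 k) ^+ 2).
Proof.
move=> y; apply: (@continuousM R _ (fun _ => c)); [exact: cst_continuous| exact: cont_qz].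
Qed.

Lemma Sbounds (f : 'rV[R]_N -> R) (z : 'rV[R]_N) (c eps : R) x :
  inCK K f -> (forall k, 0 <= z ord0 k) -> 0 <= c ->
  (forall y, K y -> `|f y - f z| <= eps + c * \sum_(k < N) (pr k y - z ord0 k) ^+ 2) ->
  (f z - eps) * S C1 x - c * (S (fun y => \sum_(k < N) pr k y ^+ 2) x
  + \sum_(k < N) (2 * z ord0 k) * S (fun y => - pr k y) x
  + (\sum_(k < N) z ord0 k ^+ 2) * S C1 x) <= S f x /\ S f x <= (f z + eps) * S C1 x + c * (S (fun y => \sum_(k < N) pr k y ^+ 2) x
  + \sum_(k < N) (2 * z ord0 k) * S (fun y => - pr k y) x
  + (\sum_(k < N) z ord0 k ^+ 2) * S C1 x).
Proof.
case: hw => _ [hom _] fK z0 c0 hb.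
have hq := Sq z x z0.
have Scq : S (fun y => c * \sum_(k < N) (pr k y - z ord0 k) ^+ 2) x =
   c * S (fun y => \sum_(k < N) (pr k y - z ord0 k) ^+ 2) x.
  by rewrite (hom _ _ (gc _ (cont_qz z)) c0).
split.
  have cN : continuous (fun y => - (c * \sum_(k < N) (pr k y - z ord0 k) ^+ 2)).
    by move=> y; exact: (continuousN (cont_cqz z c y)).
  have cg : continuous (fun y => - (c * \sum_(k < N) (pr k y - z ord0 k) ^+ 2) + (f z - eps)).
    exact: contDc.
  have hle : forall y, K y -> - (c * \sum_(k < N) (pr k y - z ord0 k) ^+ 2) + (f z - eps) <= f y.
    move=> y Ky; have := hb y Ky; rewrite ler_norml => /andP [hl _]; lra.
  have h2 := hm _ _ (gc _ cg) fK hle x.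
  rewrite Str in h2; last exact: gc.
  have := SN _ x (gc _ (cont_cqz z c)) (gc _ cN).
  rewrite Scq => h1.
  have h3 : c * S (fun y => \sum_(k < N) (pr k y - z ord0 k) ^+ 2) x <= c * (S (fun y => \sum_(k < N) pr k y ^+ 2) x
  + \sum_(k < N) (2 * z ord0 k) * S (fun y => - pr k y) x
  + (\sum_(k < N) z ord0 k ^+ 2) * S C1 x) by exact: ler_wpM2l.
  lra.
have cg : continuous (fun y => c * \sum_(k < N) (pr k y - z ord0 k) ^+ 2 + (f z + eps)).
  apply: contDc; exact: cont_cqz.
have hle : forall y, K y -> f y <= c * \sum_(k < N) (pr k y - z ord0 k) ^+ 2 + (f z + eps).
  move=> y Ky; have := hb y Ky; rewrite ler_norml => /andP [_ hr]; lra.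
have h2 := hm _ _ fK (gc _ cg) hle x.
rewrite Str in h2; last exact: gc _ (cont_cqz z c).
rewrite Scq in h2.
have h3 : c * S (fun y => \sum_(k < N) (pr k y - z ord0 k) ^+ 2) x <= c * (S (fun y => \sum_(k < N) pr k y ^+ 2) x
  + \sum_(k < N) (2 * z ord0 k) * S (fun y => - pr k y) x
  + (\sum_(k < N) z ord0 k ^+ 2) * S C1 x) by exact: ler_wpM2l.
lra.
Qed.
End Ops.
Arguments S0 {R N X K S}.
Arguments Sq {R N X K S}.
Arguments Scst {R N X K S}.
Arguments Sbounds {R N X K S}.
Arguments Str {R N X K S}.
Lemma pK (R : realType) (N : nat) (K : set 'rV[R]_N) (X : topologicalType)
  (A : ('rV[R]_N -> R) -> X -> R) (x : X) :
  compact K -> K `<=` [set x | forall k, 0 <= x ord0 k] ->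
  weakly_nonlinear K A -> monotone_op K A ->
  0 < A (fun _ => 1) x ->
  A (fun _ => 1) x * A (fun y => \sum_(k < N) pr k y ^+ 2) x
             = \sum_(k < N) (A (fun y => - pr k y) x) ^+ 2 ->
  let p := \row_k (- A (fun y => - pr k y) x / A (fun _ => 1) x) in
  (forall k, 0 <= p ord0 k) /\ K p /\
  A (fun y => \sum_(k < N) pr k y ^+ 2) x
  + \sum_(k < N) (2 * p ord0 k) * A (fun y => - pr k y) x
  + (\sum_(k < N) p ord0 k ^+ 2) * A (fun _ => 1) x = 0.
Proof.
move=> cK Kpos Aw Am a0 Aeq p.
set a := A (fun _ => 1) x.
have an : a != 0 by exact: lt0r_neq0.
have b0 : forall k, A (fun y => - pr k y) x <= 0.
  move=> k.
  have c0 : inCK K (fun _ : 'rV[R]_N => 0 : R) by apply: gc; exact: cst_continuous.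
  have := Am _ _ (gc R N K _ (cont_Npr R N k)) c0 _ x.
  rewrite (S0 Aw x); apply => y Ky; rewrite oppr_le0; exact: Kpos.
have p0 : forall k, 0 <= p ord0 k.
  move=> k; rewrite mxE; apply: divr_ge0; [rewrite oppr_ge0; exact: b0| exact: ltW].
have Q0 : A (fun y => \sum_(k < N) pr k y ^+ 2) x
  + \sum_(k < N) (2 * p ord0 k) * A (fun y => - pr k y) x
  + (\sum_(k < N) p ord0 k ^+ 2) * a = 0.
  set sb := \sum_(k < N) (A (fun y => - pr k y) x) ^+ 2.
  have e1 : \sum_(k < N) (2 * p ord0 k) * A (fun y => - pr k y) x = (-2 / a) * sb.
    rewrite /sb mulr_sumr; apply: eq_bigr => k _; rewrite mxE -/a; field; exact: an.
  have e2 : \sum_(k < N) p ord0 k ^+ 2 = sb / a ^+ 2.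
    rewrite /sb mulr_suml; apply: eq_bigr => k _; rewrite mxE -/a; field; exact: an.
  have e3 : A (fun y => \sum_(k < N) pr k y ^+ 2) x = sb / a.
    rewrite /sb -Aeq -/a; field; exact: an.
  rewrite e1 e2 e3; field; exact: an.
split => //; split => //.
apply: contrapT => nK.
have cl : closed K := compact_closed (@norm_hausdorff _ _) cK.
have oK : open (~` K) by rewrite openC.
have /nbhs_ballP [e e0 he] : nbhs p (~` K).
  by move: oK; rewrite openE; apply.
have := Sq Aw p x p0.
rewrite Q0 => hq.
have ce : inCK K (fun _ : 'rV[R]_N => e ^+ 2) by apply: gc; exact: cst_continuous.
have hle : forall y, K y -> e ^+ 2 <= \sum_(k < N) (pr k y - p ord0 k) ^+ 2.
  move=> y Ky.
  have nb : ~ ball p e y by move=> /he.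
  have [k hk] := notball e0 nb.
  apply: le_trans (sum_ge_term (fun k => (pr k y - p ord0 k) ^+ 2) k _).
    rewrite -(real_normK (num_real (pr k y - p ord0 k))) distrC.
    apply: lerXn2r; rewrite ?nnegrE //; exact: ltW.
  by move=> i; exact: sqr_ge0.
have := Am _ _ ce (gc R N K _ (cont_qz R N p)) hle x.
rewrite (Scst Aw) -/a => h.
have : 0 < e ^+ 2 * a by rewrite mulr_gt0 // exprn_gt0.
lra.
Qed.
Lemma comb (R : realType) (Tf Af fz T1 A1 QT eps c : R) :
  (fz - eps) * T1 - c * QT <= Tf -> Tf <= (fz + eps) * T1 + c * QT ->
  (fz - eps) * A1 - c * 0 <= Af -> Af <= (fz + eps) * A1 + c * 0 ->
  `|Tf - Af| <= `|fz| * `|T1 - A1| + eps * (T1 + A1) + c * QT.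
Proof.
move=> h1 h2 h3 h4.
have H1 : fz * (T1 - A1) <= `|fz| * `|T1 - A1| by rewrite -normrM ler_norm.
have H2 : - (fz * (T1 - A1)) <= `|fz| * `|T1 - A1| by rewrite -normrM -normrN ler_norm.
rewrite ler_norml; apply/andP; split; lra.
Qed.

Lemma fin (R : realType) (e eps eta M SA c W : R) :
  0 < e -> 0 <= M -> 0 <= SA -> 0 <= c -> 0 <= W -> eps = e / (4 * (SA + 1)) ->
  0 < eta -> eta <= 1 -> eta <= e / (2 * (M + c * (1 + W) + 1)) ->
  M * eta + eps * (2 * SA + eta) + c * (eta * (1 + W)) < e.
Proof.
move=> e0 M0 SA0 c0 W0 he eta0 eta1 heta.
have L0 : 0 < M + c * (1 + W) + 1.
  have : 0 <= c * (1 + W) by apply: mulr_ge0 => //; lra.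
  lra.
have h1 : eta * (M + c * (1 + W) + 1) <= e / 2.
  have := ler_wpM2r (ltW L0) heta.
  have -> : e / (2 * (M + c * (1 + W) + 1)) * (M + c * (1 + W) + 1) = e / 2.
    by field; rewrite lt0r_neq0.
  by [].
have eps0 : 0 < eps by rewrite he divr_gt0 // mulr_gt0 //; lra.
have h2 : eps * (2 * SA + eta) <= eps * (2 * SA + 1) by apply: ler_wpM2l; lra.
have h3 : e / 2 - eps * (2 * SA + 1) = eps.
  rewrite he; field; have : 0 < SA + 1 by lra.
  by move=> /lt0r_neq0.
have : eta * (M + c * (1 + W) + 1) = M * eta + c * (eta * (1 + W)) + eta by ring.
lra.
Qed.
Lemma Qbound (R : realType) (N : nat) (z : 'rV[R]_N) (TS AS T1 A1 eta : R) (Tk Ak : 'I_N -> R) :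
  (forall k, 0 <= z ord0 k) -> `|TS - AS| < eta -> `|T1 - A1| < eta ->
  (forall k, `|Tk k - Ak k| < eta) ->
  AS + \sum_(k < N) (2 * z ord0 k) * Ak k + (\sum_(k < N) z ord0 k ^+ 2) * A1 = 0 ->
  TS + \sum_(k < N) (2 * z ord0 k) * Tk k + (\sum_(k < N) z ord0 k ^+ 2) * T1 <=
  eta * (1 + (\sum_(k < N) 2 * z ord0 k + \sum_(k < N) z ord0 k ^+ 2)).
Proof.
move=> z0 hS h1 hk hA.
have hs : \sum_(k < N) (2 * z ord0 k) * Tk k <=
    \sum_(k < N) (2 * z ord0 k) * Ak k + eta * \sum_(k < N) 2 * z ord0 k.
  rewrite mulr_sumr -big_split; apply: ler_sum => k _ /=.
  have w0 : 0 <= 2 * z ord0 k by apply: mulr_ge0.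
  have := hk k; rewrite ltr_norml => /andP [_ h].
  have := ler_wpM2l w0 (ltW h). lra.
have q0 : 0 <= \sum_(k < N) z ord0 k ^+ 2 by apply: sumr_ge0 => k _; exact: sqr_ge0.
have h1' : (\sum_(k < N) z ord0 k ^+ 2) * T1 <=
   (\sum_(k < N) z ord0 k ^+ 2) * A1 + eta * (\sum_(k < N) z ord0 k ^+ 2).
  move: h1; rewrite ltr_norml => /andP [_ h].
  have := ler_wpM2l q0 (ltW h). lra.
move: hS; rewrite ltr_norml => /andP [_ h].
lra.
Qed.
Arguments Qbound {R N z TS AS T1 A1 eta Tk Ak}.
Arguments comb {R Tf Af fz T1 A1 QT eps c}.
Arguments fin {R e eps eta M SA c W}.
Arguments unif_est {R N K f eps}.
Arguments pK {R N K X A}.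
Theorem mainTheorem3 (R : realType) (N : nat) (K : set 'rV[R]_N)
  (X : topologicalType)
  (T : nat -> ('rV[R]_N -> R) -> X -> R) (A : ('rV[R]_N -> R) -> X -> R) :
  (0 < N)%N ->
  K !=set0 -> compact K -> K `<=` [set x | forall k, 0 <= x ord0 k] ->
  hausdorff_space X -> compact [set: X] ->
  (forall n, maps_CK_CX K (T n)) -> maps_CK_CX K A ->
  (forall n, weakly_nonlinear K (T n)) -> weakly_nonlinear K A ->
  (forall n, monotone_op K (T n)) -> monotone_op K A ->
  (forall x, 0 < A (fun _ => 1) x) ->
  (forall x, A (fun _ => 1) x * A (fun y => \sum_(k < N) pr k y ^+ 2) x
             = \sum_(k < N) (A (fun y => - pr k y) x) ^+ 2) ->
  unif_cvg (fun n => T n (fun _ => 1)) (A (fun _ => 1)) ->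
  (forall k : 'I_N, unif_cvg (fun n => T n (fun y => - pr k y)) (A (fun y => - pr k y))) ->
  unif_cvg (fun n => T n (fun y => \sum_(k < N) pr k y ^+ 2))
           (A (fun y => \sum_(k < N) pr k y ^+ 2)) ->
  forall f, inCK K f -> unif_cvg (fun n => T n f) (A f).
Proof.
move=> N0 Kne cK Kpos hX cX Tc Ac Tw Aw Tm Am A1pos Aeq h1 hk hs f fK e e0.
have c1 : inCK K (fun _ : 'rV[R]_N => 1 : R) by apply: gc; exact: cst_continuous.
have [SA HSA] := bound_compact (@continuous_subspaceT _ _ [set: X] _ (Ac _ c1)) cX.
have [M HM] := bound_compact fK cK.
pose eps := e / (4 * (`|SA| + 1)).
have eps0 : 0 < eps by rewrite divr_gt0 // mulr_gt0 //; apply: ltr_wpDl.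
have [c [c0 hc]] := unif_est cK fK eps0.
pose w := fun y : 'rV[R]_N => \sum_(k < N) 2 * y ord0 k + \sum_(k < N) y ord0 k ^+ 2.
have wc : continuous w.
  apply: contD.
    apply: (@cont_sum R N _ _ (fun k y => 2 * pr k y)) => k y.
    apply: (@continuousM R _ (fun _ => 2) (pr k)); [exact: cst_continuous| exact: cont_pr].
  apply: (@cont_sum R N _ _ (fun k y => pr k y ^+ 2)) => k.
  have -> : (fun y => pr k y ^+ 2) = (pr k \* pr k :  'rV[R]_N -> R).
    by apply: funext => y; rewrite expr2.
  move=> y; apply: continuousM; exact: cont_pr.
have [W HW] := bound_compact (gc R N K _ wc) cK.
pose L := `|M| + c * (1 + `|W|) + 1.
have L0 : 0 < L.
  have : 0 <= c * (1 + `|W|) by apply: mulr_ge0 => //; apply: addr_ge0.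
  rewrite /L; have := normr_ge0 M; lra.
pose eta := Num.min 1 (e / (2 * L)).
have eta0 : 0 < eta by rewrite lt_min ltr01 /= divr_gt0 // mulr_gt0.
have [n1 H1] := h1 eta eta0.
have [n2 H2] := hs eta eta0.
have [nk Hk] := choice (fun k => hk k eta eta0).
exists (maxn n1 (maxn n2 (\max_(k < N) nk k))) => n hn x.
have hn1 : (n1 <= n)%N by apply: leq_trans hn; exact: leq_maxl.
have hn2 : (n2 <= n)%N.
  by apply: leq_trans hn; apply: leq_trans (leq_maxr _ _); exact: leq_maxl.
have hnk : forall k, (nk k <= n)%N.
  move=> k; apply: leq_trans hn; apply: leq_trans (leq_maxr _ _).
  apply: leq_trans (leq_maxr _ _); exact: (@leq_bigmax _ (fun k => nk k) k).
have [p0 [Kz Q0]] := pK x cK Kpos Aw Am (A1pos x) (Aeq x).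
set z := \row_k _ in p0 Kz Q0.
have hcz : forall y, K y -> `|f y - f z| <= eps + c * \sum_(k < N) (pr k y - z ord0 k) ^+ 2.
  by move=> y Ky; apply: hc.
have [TL TU] := Sbounds (Tw n) (Tm n) f z c eps x fK p0 c0 hcz.
have [AL AU] := Sbounds Aw Am f z c eps x fK p0 c0 hcz.
rewrite Q0 in AL AU.
have QT := Qbound p0 (H2 n hn2 x) (H1 n hn1 x) (fun k => Hk k n (hnk k) x) Q0.
have hcomb := comb TL TU AL AU.
apply: le_lt_trans hcomb _.
have hT1 := H1 n hn1 x.
have hA1 : `|A (fun _ => 1) x| <= `|SA| by apply: le_trans (HSA x I) (ler_norm _).
have hfz : `|f z| <= `|M| by apply: le_trans (HM z Kz) (ler_norm _).
have hwz : w z <= `|W| by apply: le_trans (ler_norm _) (le_trans (HW z Kz) (ler_norm _)).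
have heta1 : eta <= 1 by rewrite /eta ge_min lexx.
have heta2 : eta <= e / (2 * L) by rewrite /eta ge_min lexx orbT.
have fn := fin e0 (normr_ge0 M) (normr_ge0 SA) c0 (normr_ge0 W) (erefl eps) eta0 heta1 heta2.
apply: le_lt_trans fn.
have ha : `|f z| * `|T n (fun _ => 1) x - A (fun _ => 1) x| <= `|M| * eta.
  by apply: ler_pM => //; exact: ltW.
have hb : eps * (T n (fun _ => 1) x + A (fun _ => 1) x) <= eps * (2 * `|SA| + eta).
  apply: ler_wpM2l; first exact: ltW.
  move: hT1; rewrite ltr_norml => /andP [_ h].
  have := ler_norm (A (fun _ => 1) x); lra.
have hc' : c * (T n (fun y => \sum_(k < N) pr k y ^+ 2) x +
   \sum_(k < N) 2 * z ord0 k * T n (fun y => - pr k y) x +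
   (\sum_(k < N) z ord0 k ^+ 2) * T n (fun _ => 1) x) <= c * (eta * (1 + `|W|)).
  apply: ler_wpM2l => //; apply: le_trans QT _.
  apply: ler_wpM2l; first exact: ltW.
  rewrite /w in hwz; lra.
lra.
Qed.
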